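(* Let $(X,\|\cdot\|)$ be a Banach space, $B_X=\{x\in X:\|x\|\le1\}$ and $B=\{x\in X:\|x\|\ge2\}$. If the ordered pair $(B_X,B)$ has the $UC$ property, then $(X,\|\cdot\|)$ is a uniformly convex Banach space.
   Context: $\mathrm{dist}(A,B)=\inf\{\|a-b\|:a\in A,b\in B\}$. The ordered pair $(A,B)$ has the $UC$ property if for all sequences $\{x_n\},\{z_n\}\subset A$, $\{y_n\}\subset B$ with $\lim_n\|x_n-y_n\|=\lim_n\|z_n-y_n\|=\mathrm{dist}(A,B)$ one has $\lim_n\|x_n-z_n\|=0$. $X$ is uniformly convex if for every $\varepsilon\in(0,2]$, $\delta(\varepsilon)=\inf\{1-\|\frac{x+y}{2}\|: x,y\in B_X,\ \|x-y\|\ge\varepsilon\}>0$. *)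

(* Defs.v *)
From HB Require Import structures.
From mathcomp Require Import all_boot all_order all_algebra.
From mathcomp Require Import all_classical all_reals all_analysis.
Set Implicit Arguments. Unset Strict Implicit. Unset Printing Implicit Defensive.
Import Order.TTheory GRing.Theory Num.Theory.
Import numFieldNormedType.Exports.
Local Open Scope classical_set_scope.
Local Open Scope ring_scope.

Definition setdist {R : realType} {X : normedModType R} (A B : set X) : R :=
  inf [set `|a - b| | a in A & b in B].

Definition UC_property {R : realType} {X : normedModType R} (A B : set X) : Prop :=
  forall (x z y : nat -> X),
    (forall n, A (x n)) -> (forall n, A (z n)) -> (forall n, B (y n)) ->
    (fun n => `|x n - y n|) @ \oo --> setdist A B ->
    (fun n => `|z n - y n|) @ \oo --> setdist A B ->
    (fun n => `|x n - z n|) @ \oo --> (0 : R).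

Definition unit_ball {R : realType} {X : normedModType R} : set X :=
  [set x | `|x| <= 1].

(* modulus of convexity, as an extended real (inf of the empty set = +oo) *)
Definition modulus_convexity {R : realType} {X : normedModType R} (eps : R) : \bar R :=
  ereal_inf [set ((1 - `|2^-1 *: (p.1 + p.2)|)%:E) |
               p in [set p : X * X | `|p.1| <= 1 /\ `|p.2| <= 1 /\ eps <= `|p.1 - p.2|]].

Definition uniformly_convex {R : realType} (X : normedModType R) : Prop :=
  forall eps : R, 0 < eps <= 2 -> (0 < modulus_convexity (X := X) eps)%E.

(* Main.v *)
Require Import Defs.
From HB Require Import structures.
From mathcomp Require Import all_boot all_order all_algebra.
From mathcomp Require Import all_classical all_reals all_analysis.
From mathcomp Require Import lra.
Import Order.TTheory GRing.Theory Num.Theory.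
Import numFieldNormedType.Exports.
Local Open Scope classical_set_scope.
Local Open Scope ring_scope.

Lemma L1 (R : pzRingType) (V : lmodType R) (c : R) (x z : V) :
  x - c *: (x + z) = - ((c - 1) *: x + c *: z).
Proof. by rewrite scalerDr scalerBl scale1r opprD [RHS]opprD opprB addrA. Qed.
Lemma L2 (R : pzRingType) (V : lmodType R) (c : R) (x z : V) :
  z - c *: (x + z) = - (c *: x + (c - 1) *: z).
Proof. by rewrite (addrC x z) L1 (addrC ((c - 1) *: z)). Qed.

Theorem theorem44 (R : realType) (X : completeNormedModType R) :
  UC_property (unit_ball (X := X)) [set x : X | `|x| >= 2] ->
  uniformly_convex X.
Proof.
move=> HUC eps /andP[eps0 eps2].
rewrite ltNge; apply/negP => Hm.
pose h (n : nat) : R := (n.+1%:R)^-1.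
have h0 n : 0 < h n by rewrite /h invr_gt0 ltr0n.
pose t n := h n / (1 + h n).
have t0 n : 0 < t n by rewrite /t divr_gt0 // ltr_wpDl // ltW.
have th n : t n * (1 + h n) = h n.
  by rewrite /t mulrVK // unitfE gt_eqF // ltr_wpDl // ltW.
have Hex : forall n, exists p : X * X,
    [/\ `|p.1| <= 1, `|p.2| <= 1, eps <= `|p.1 - p.2| &
        1 - `|2^-1 *: (p.1 + p.2)| < t n].
  move=> n.
  have : (modulus_convexity (X := X) eps < (t n)%:E)%E.
    by apply: (le_lt_trans Hm); rewrite lte_fin.
  move=> /ereal_inf_lt [_ [p [p1 [p2 p3]] <-]]; rewrite lte_fin => lt.
  by exists p; split.
have /choice [P HP] := Hex.
pose x n := (P n).1. pose z n := (P n).2.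
pose s n := `|x n + z n|.
have Hs n : [/\ `|x n| <= 1, `|z n| <= 1, eps <= `|x n - z n|,
    s n <= 2 & 2 < s n * (1 + h n)].
  have [a b c d] := HP n.
  rewrite normrZ ger0_norm // in d.
  split => //.
    by rewrite /s (le_trans (ler_normD _ _)) //; lra.
  have := th n; have := h0 n; rewrite -/(s n) in d; nra.
have hx n : `|x n| <= 1 by have [] := Hs n.
have hz n : `|z n| <= 1 by have [] := Hs n.
have s0 n : 0 < s n by have [_ _ _ _] := Hs n; have := h0 n; nra.
pose c n := 2 / s n.
pose y n := c n *: (x n + z n).
have ny n : `|y n| = 2.
  by rewrite /y normrZ -/(s n) ger0_norm ?divr_ge0 ?ltW // mulfVK ?gt_eqF.
have c1 n : 1 <= c n.
  by rewrite /c ler_pdivlMr // mul1r; have [] := Hs n.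
have c2 n : c n <= 1 + h n.
  rewrite /c ler_pdivrMr //; have [_ _ _ _] := Hs n; have := h0 n; nra.
have c1' n : 0 <= c n - 1 by rewrite subr_ge0.
have c0' n : 0 <= c n by apply: le_trans (c1 n).
have bnd (w : X) n : `|w| <= 1 -> `|x n| <= 1 \/ `|z n| <= 1 ->
    (w = x n \/ w = z n) -> 1 <= `|w - y n| <= 1 + 2 * h n.
  move=> wn _ [->|->]; apply/andP; split.
  - rewrite distrC (le_trans _ (lerB_dist _ _)) // ny.
    by have [] := Hs n; lra.
  - rewrite /y L1.
    rewrite normrN (le_trans (ler_normD _ _)) // [`|_ *: x n|]normrZ [`|_ *: z n|]normrZ.
    rewrite (ger0_norm (c1' n)) (ger0_norm (c0' n)).
    have [a b _ _ _] := Hs n; have := c1 n; have := c2 n; have := normr_ge0 (x n); have := normr_ge0 (z n); nra.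
  - rewrite distrC (le_trans _ (lerB_dist _ _)) // ny.
    by have [] := Hs n; lra.
  - rewrite /y L2.
    rewrite normrN (le_trans (ler_normD _ _)) // [`|_ *: x n|]normrZ [`|_ *: z n|]normrZ.
    rewrite (ger0_norm (c1' n)) (ger0_norm (c0' n)).
    have [a b _ _ _] := Hs n; have := c1 n; have := c2 n; have := normr_ge0 (x n); have := normr_ge0 (z n); nra.
have hc : (fun n => 1 + 2 * h n) @ \oo --> (1 : R).
  rewrite -[X in _ --> X]addr0; apply: cvgD; first exact: cvg_cst.
  rewrite -(mulr0 2); apply: cvgMr; exact: cvg_harmonic.
pose d := setdist (unit_ball (X := X)) [set w : X | `|w| >= 2].
have d1 : d = 1.
  apply/eqP; rewrite eq_le; apply/andP; split.
  - apply: (ler_cvg_to (cvg_cst d) hc); apply: nearW => n.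
    have /andP[_ ub] := bnd (x n) n (hx n) (or_introl (hx n)) (or_introl erefl).
    apply: le_trans ub; apply: ge_inf.
      by exists 0 => _ [a _ [b _ <-]]; rewrite normr_ge0.
    exists (x n); first by have [] := Hs n.
    by exists (y n) => //; rewrite /= ny.
  - apply: lb_le_inf.
      exists `|x 0 - y 0|; exists (x 0); first by have [] := Hs 0.
      by exists (y 0) => //; rewrite /= ny.
    move=> _ [a Ha [b Hb <-]].
    rewrite distrC (le_trans _ (lerB_dist _ _)) //.
    by move: Ha Hb; rewrite /unit_ball /=; lra.
have Hx : (fun n => `|x n - y n|) @ \oo --> d.
  rewrite d1; eapply (squeeze_cvgr (f:=fun=> (1:R))); [|exact: cvg_cst|exact: hc]; apply: nearW => n.
  exact: bnd (x n) n (hx n) (or_introl (hx n)) (or_introl erefl).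
have Hz : (fun n => `|z n - y n|) @ \oo --> d.
  rewrite d1; eapply (squeeze_cvgr (f:=fun=> (1:R))); [|exact: cvg_cst|exact: hc]; apply: nearW => n.
  have [a b _ _ _] := Hs n.
  exact: bnd (z n) n b (or_introl a) (or_intror erefl).
have hy n : [set w : X | `|w| >= 2] (y n) by rewrite /= ny.
have Hc := HUC x z y hx hz hy Hx Hz.
 have [N _ HN] := cvgr_lt _ Hc _ eps0.
have := HN N (leqnn N); have [_ _ e _ _] := Hs N; rewrite /=; lra.
Qed.
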